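(* Assume $f$ satisfies conditions (A0)–(A3) below, with $R$ the constant from (A1). Then every $2\pi$-periodic solution $x$ of $\ddot x(t)=f(t,x(t),\mathbf x_t,\dot x(t))$ satisfies $|x(t)|\le R$ for all $t\in\mathbb R$.
   Context: Let $n,m\ge 1$ be integers, $\mathbf V=\mathbb R^n$ with Euclidean inner product $x\bullet z$ and norm $|x|$. For $\mathbf y=(y^1,\dots,y^m)\in\mathbf V^m$ put $|\mathbf y|:=\max_{j}|y^j|$. Fix reals $0=\tau_0<\tau_1<\dots<\tau_m<2\pi$ with $\tau_{m-j+1}=2\pi-\tau_j$ for $j=1,\dots,m$. Let $f:\mathbb R\times\mathbf V\times\mathbf V^m\times\mathbf V\to\mathbf V$, and for $x:\mathbb R\to\mathbf V$ put $\mathbf x_t:=(x(t-\tau_1),\dots,x(t-\tau_m))$. A $2\pi$-periodic solution is a $C^2$ function $x:\mathbb R\to\mathbf V$ with $x(t+2\pi)=x(t)$ and $\ddot x(t)=f(t,x(t),\mathbf x_t,\dot x(t))$ for all $t$. Conditions: (A0) $f$ is continuous and $2\pi$-periodic in $t$. (A1) There is $R>0$ such that for all $t$, $x,z\in\mathbf V$, $\mathbf y\in\mathbf V^m$: if $|x|\ge R$, $|\mathbf y|\le|x|$ and $x\bullet z=0$, then $x\bullet f(t,x,\mathbf y,z)>0$. (A2) There is a continuous $\phi:[0,\infty)\to(0,\infty)$ with $\int_0^\infty \frac{s\,ds}{\phi(s)}=\infty$ and $|f(t,x,\mathbf y,z)|\le\phi(|z|)$ whenever $|x|\le R$, $|\mathbf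 y|\le R$. (A3) There are $\alpha>0,K>0$ with $|f(t,x,\mathbf y,z)|\le\alpha(x\bullet f(t,x,\mathbf y,z)+|z|^2)+K$ whenever $|x|\le R$, $|\mathbf y|\le R$. *)

(* Defs.v *)
From HB Require Import structures.
From mathcomp Require Import all_boot all_order all_algebra.
From mathcomp Require Import all_classical all_reals all_analysis.
Set Implicit Arguments. Unset Strict Implicit. Unset Printing Implicit Defensive.
Import Order.TTheory GRing.Theory Num.Theory.
Import numFieldNormedType.Exports.
Local Open Scope ring_scope.
Local Open Scope classical_set_scope.

Definition edot (R : realType) (n : nat) (x z : 'rV[R]_n) : R :=
  \sum_(k < n) x 0 k * z 0 k.

Definition enorm (R : realType) (n : nat) (x : 'rV[R]_n) : R :=
  Num.sqrt (edot x x).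

(* elements of V^m are m x n matrices, row j = y^j;  |y| = max_j |y^j| *)
Definition mnorm (R : realType) (m n : nat) (y : 'M[R]_(m, n)) : R :=
  \big[Num.max/0]_(j < m) enorm (row j y).

(* x_t = (x(t - tau_1), ..., x(t - tau_m)) *)
Definition delayvec (R : realType) (m n : nat) (tau : nat -> R)
  (x : R -> 'rV[R]_n) (t : R) : 'M[R]_(m, n) :=
  \matrix_(j < m, k < n) x (t - tau j.+1) 0 k.

Definition admissible_delays (R : realType) (m : nat) (tau : nat -> R) : Prop :=
  [/\ tau 0%N = 0,
      (forall j, (j < m)%N -> tau j < tau j.+1),
      tau m < 2 * pi
    & (forall j, (1 <= j <= m)%N -> tau (m - j + 1)%N = 2 * pi - tau j)].

Definition periodic_solution (R : realType) (m n : nat) (tau : nat -> R)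
  (f : R -> 'rV[R]_n -> 'M[R]_(m, n) -> 'rV[R]_n -> 'rV[R]_n)
  (x : R -> 'rV[R]_n) : Prop :=
  [/\ (forall t, derivable x t 1),
      (forall t, derivable x^`() t 1),
      continuous x^`()^`(),
      (forall t, x (t + 2 * pi) = x t)
    & (forall t, x^`()^`() t = f t (x t) (delayvec m tau x t) (x^`() t))].

Definition condA0 (R : realType) (m n : nat)
  (f : R -> 'rV[R]_n -> 'M[R]_(m, n) -> 'rV[R]_n -> 'rV[R]_n) : Prop :=
  continuous (fun p : R * 'rV[R]_n * 'M[R]_(m, n) * 'rV[R]_n =>
                f p.1.1.1 p.1.1.2 p.1.2 p.2)
  /\ (forall t x y z, f (t + 2 * pi) x y z = f t x y z).

Definition condA1 (R : realType) (m n : nat)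
  (f : R -> 'rV[R]_n -> 'M[R]_(m, n) -> 'rV[R]_n -> 'rV[R]_n) (R0 : R) : Prop :=
  forall t x y z, R0 <= enorm x -> mnorm y <= enorm x -> edot x z = 0 ->
    0 < edot x (f t x y z).

Definition condA2 (R : realType) (m n : nat)
  (f : R -> 'rV[R]_n -> 'M[R]_(m, n) -> 'rV[R]_n -> 'rV[R]_n) (R0 : R) : Prop :=
  exists phi : R -> R,
    [/\ {within `[0, +oo[, continuous phi},
        (forall s, 0 <= s -> 0 < phi s),
        (\int[lebesgue_measure]_(s in (`[0%R, +oo[ : set R)) (s / phi s)%:E = +oo)%E
      & (forall t x y z, enorm x <= R0 -> mnorm y <= R0 ->
           enorm (f t x y z) <= phi (enorm z))].

Definition condA3 (R : realType) (m n : nat)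
  (f : R -> 'rV[R]_n -> 'M[R]_(m, n) -> 'rV[R]_n -> 'rV[R]_n) (R0 : R) : Prop :=
  exists alpha K : R, [/\ 0 < alpha, 0 < K &
    forall t x y z, enorm x <= R0 -> mnorm y <= R0 ->
      enorm (f t x y z) <= alpha * (edot x (f t x y z) + enorm z ^+ 2) + K].

(* Main.v *)
Require Import Defs.
From HB Require Import structures.
From mathcomp Require Import all_boot all_order all_algebra.
From mathcomp Require Import all_classical all_reals all_analysis.
From mathcomp Require Import lra.
Import Order.TTheory GRing.Theory Num.Theory.
Import numFieldNormedType.Exports.
Local Open Scope ring_scope.
Local Open Scope classical_set_scope.

Lemma edotC (R : realType) n (a b : 'rV[R]_n) : edot a b = edot b a.
Proof. by rewrite /edot; apply: eq_bigr => k _; rewrite mulrC. Qed.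

Lemma edot_ge0 (R : realType) n (a : 'rV[R]_n) : 0 <= edot a a.
Proof. by rewrite /edot; apply: sumr_ge0 => k _; rewrite -expr2 sqr_ge0. Qed.

Lemma per_int (R : realType) n (x : R -> 'rV[R]_n) (P : R) :
  (forall t, x (t + P) = x t) -> forall (z : int) s, x (s + z%:~R * P) = x s.
Proof.
move=> per.
have pn : forall (k : nat) s, x (s + k%:R * P) = x s.
  elim=> [|k IH] s; first by rewrite mul0r addr0.
  by rewrite -natr1 mulrDl mul1r addrA per IH.
case=> k s; first by rewrite -pmulrn pn.
rewrite NegzE mulrNz mulNr.
rewrite -[in RHS](subrK ((k.+1)%:~R * P) s).
by rewrite -pmulrn pn.
Qed.

Lemma per_red (R : realType) n (x : R -> 'rV[R]_n) (P : R) :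
  0 < P -> (forall t, x (t + P) = x t) ->
  forall s, exists2 s', 0 <= s' <= P & x s = x s'.
Proof.
move=> P0 per s.
set z := Num.floor (s / P).
have h0 : z%:~R <= s / P := Num.Theory.floor_le _.
have h1 : s / P < (z + 1)%:~R := floorD1_gt _.
rewrite ler_pdivlMr // in h0.
rewrite ltr_pdivrMr // intrD mulrDl mul1r in h1.
exists (s - z%:~R * P).
  apply/andP; split; lra.
by rewrite -{1}(subrK (z%:~R * P) s) per_int.
Qed.
Lemma comp_der (R : realType) n (y : R -> 'rV[R]_n) t k :
  derivable y t 1 ->
  is_derive t 1 (fun s => y s 0 k) (derive1 y t 0 k).
Proof.
move=> dy.
have dk : derivable (fun s => y s 0 k) t 1 by move/derivable_mxP: dy; apply.
apply: DeriveDef => //.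
by rewrite derive1E derive_mx // mxE.
Qed.

Lemma der_dot (R : realType) n (y z : R -> 'rV[R]_n) t :
  derivable y t 1 -> derivable z t 1 ->
  is_derive t 1 (fun s => edot (y s) (z s))
    (edot (derive1 y t) (z t) + edot (y t) (derive1 z t)).
Proof.
move=> dy dz.
have H : forall k : 'I_n, is_derive t 1 (fun s => y s 0 k * z s 0 k)
   (derive1 y t 0 k * z t 0 k + y t 0 k * derive1 z t 0 k).
  move=> k.
  have := is_deriveM (@comp_der _ _ y t k dy) (@comp_der _ _ z t k dz).
  have E : ((fun s => y s 0 k) * (fun s => z s 0 k))%R = (fun s => y s 0 k * z s 0 k) :> (R -> R) by apply/funext.
  rewrite E => H; apply: is_derive_eq.
  by rewrite addrC; congr (_ + _); try exact: mulrC.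
have := is_derive_sum H.
rewrite /edot -big_split /=.
have -> : (\sum_(i < n) (fun s => y s 0 i * z s 0 i)) = (fun s => edot (y s) (z s)).
  by apply/funext => s; rewrite /edot fct_sumE.
by [].
Qed.

Theorem lemma3p2 (R : realType) (n m : nat) (tau : nat -> R)
  (f : R -> 'rV[R]_n -> 'M[R]_(m, n) -> 'rV[R]_n -> 'rV[R]_n) (R0 : R) :
  (1 <= n)%N -> (1 <= m)%N ->
  admissible_delays m tau ->
  condA0 f -> 0 < R0 -> condA1 f R0 -> condA2 f R0 -> condA3 f R0 ->
  forall x : R -> 'rV[R]_n, periodic_solution tau f x ->
  forall t : R, enorm (x t) <= R0.
Proof.
move=> _ _ _ _ R0pos A1 _ _ x [dx dx' cx'' per eqx] t.
have P0 : 0 < 2 * pi :> R by rewrite mulr_gt0 // pi_gt0.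
pose g := fun s => edot (x s) (x s).
pose hh := fun s => edot (x s) (derive1 x s).
have Dg : forall s : R, is_derive s (1:R) g (2 * hh s).
  move=> s; apply: is_derive_eq; first exact: der_dot.
  by rewrite edotC mulr2n mulrDl mul1r.
have Dh : forall s : R, is_derive s (1:R) hh
    (edot (derive1 x s) (derive1 x s) + edot (x s) (derive1 (derive1 x) s)).
  by move=> s; apply: der_dot.
have cg : continuous g.
  move=> s; apply: differentiable_continuous; apply/derivable1_diffP.
  exact: (@ex_derive _ _ _ _ _ _ _ (Dg s)).
have [t0 t0in gmax0] := EVT_max (ltW P0) (continuous_subspaceT cg).
have gmax : forall s, g s <= g t0.
  move=> s; have [s' s'in Hs] := @per_red _ _ x _ P0 per s.
  rewrite /g Hs; apply: gmax0.
  by rewrite in_itv.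
rewrite leNgt; apply/negP => Ht.
have ge : forall s, enorm (x s) <= enorm (x t0).
  by move=> s; rewrite /enorm ler_sqrt ?edot_ge0 //; exact: gmax.
have hR : R0 <= enorm (x t0) by apply: ltW; apply: lt_le_trans Ht (ge t).
have hm : mnorm (delayvec m tau x t0) <= enorm (x t0).
  rewrite /mnorm; apply: Order.POrderTheory.bigmax_le; first exact: sqrtr_ge0.
  move=> j _.
  have -> : row j (delayvec m tau x t0) = x (t0 - tau j.+1).
    by apply/rowP => k; rewrite !mxE.
  exact: ge.
have Dg0 : is_derive t0 (1:R) g 0.
  apply: (@derive1_at_max _ g (t0 - 1) (t0 + 1)).
  - lra.
  - by move=> s _; exact: (@ex_derive _ _ _ _ _ _ _ (Dg s)).
  - rewrite in_itv /=; apply/andP; split; lra.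
  - by move=> s _; exact: gmax.
have hh0 : hh t0 = 0.
  have E1 := @derive_val _ _ _ _ _ _ _ (Dg t0).
  have E2 := @derive_val _ _ _ _ _ _ _ Dg0.
  rewrite E1 in E2; move/eqP: E2; rewrite mulf_eq0 pnatr_eq0 /=.
  by move/eqP.
have pos1 : 0 < edot (x t0) (derive1 (derive1 x) t0).
  rewrite eqx; apply: A1 => //.
have L0 : 0 < edot (derive1 x t0) (derive1 x t0) + edot (x t0) (derive1 (derive1 x) t0).
  by apply: ltr_wpDl => //; exact: edot_ge0.
move: L0; set L := (_ + _) => L0.
have dh := @ex_derive _ _ _ _ _ _ _ (Dh t0).
have Lv := @derive_val _ _ _ _ _ _ _ (Dh t0).
have cv : (fun e : R => e^-1 *: ((hh \o shift t0) (e *: (1:R)) - hh t0)) @ 0^' --> 'D_1 hh t0 := dh.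
rewrite Lv -/L in cv.
have L2 : 0 < L / 2 by rewrite divr_gt0.
move/cvgrPdist_lt: cv => /(_ _ L2).
move/nbhs_ballP => [r /= r0 Hr].
have hpos : forall s, t0 < s -> s < t0 + r -> 0 < hh s.
  move=> s a b.
  have hb : ball (0:R) r (s - t0).
    rewrite -ball_normE /= sub0r normrN ger0_norm; lra.
  have hn : s - t0 != 0 by rewrite subr_eq0; apply/negP => /eqP E; lra.
  have H1 := Hr _ hb hn.
  have E : (s - t0)%:A + t0 = s by rewrite [_%:A]mulr1 subrK.
  rewrite E hh0 subr0 in H1.
  have H2 := ler_norm (L - (s - t0)^-1 * hh s).
  have H1' : `|L - (s - t0)^-1 * hh s| < L / 2 := H1.
  have H3 : 0 < (s - t0)^-1 * hh s by lra.
  by move: H3; rewrite pmulr_rgt0 // invr_gt0 subr_gt0.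
have ab : t0 < t0 + r / 2 by lra.
have [c cin Hc] := @MVT R g (fun s => 2 * hh s) t0 (t0 + r/2) ab
  (fun s _ => Dg s) (continuous_subspaceT cg).
move: cin; rewrite in_itv /= => /andP[c1 c2].
have hc := hpos c c1 ltac:(lra).
have : 0 < 2 * hh c * (t0 + r / 2 - t0) by rewrite !mulr_gt0 //; lra.
have := gmax (t0 + r/2).
lra.
Qed.
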